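(* Let $(g,f)$ be a Riordan matrix possessing a type-II $B$-sequence $(\hat b_j)_{j\ge0}$ with generating function $\hat B(t)=\sum_{j\ge0}\hat b_jt^j$, and let $Z(t)$ be the generating function of its $Z$-sequence. Then $$g=1+tg\,\hat B(tf),\qquad Z(f)=\hat B(tf),\qquad Z(t)=\hat B(t\bar f(t)).$$
   Context: Let $K$ be $\mathbb{R}$ or $\mathbb{C}$. A (proper) Riordan matrix is a pair $(g,f)$ of formal power series in $K[[t]]$ with $g(0)=1$, $f(0)=0$, $f'(0)\neq 0$, identified with the infinite lower triangular matrix $(d_{n,k})_{n,k\ge0}$, $d_{n,k}=[t^n]g(t)f(t)^k$; we set $d_{n,k}=0$ if $n<0$, $k<0$ or $k>n$. $\bar f$ is the compositional inverse of $f$. The $Z$-sequence of $(g,f)$ is the unique sequence whose generating function $Z(t)$ satisfies $g(t)=1/(1-tZ(f(t)))$. A type-II $B$-sequence of $(g,f)$ is a sequence $(\hat b_j)_{j\ge0}$ such that $d_{n+1,0}=\sum_{j\ge0}\hat b_j d_{n-j,j}$ for all $n\ge0$. *)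

(* Defs.v *)
From mathcomp Require Import all_boot all_algebra.
Set Implicit Arguments. Unset Strict Implicit. Unset Printing Implicit Defensive.
Import GRing.Theory.
Local Open Scope ring_scope.

Definition fps (K : fieldType) := nat -> K.

Section FPS.
Variable K : fieldType.

Definition fps1 : fps K := fun n => (n == 0%N)%:R.
Definition fpsT : fps K := fun n => (n == 1%N)%:R.

Definition fps_add (a b : fps K) : fps K := fun n => a n + b n.
Definition fps_sub (a b : fps K) : fps K := fun n => a n - b n.

Definition fps_mul (a b : fps K) : fps K :=
  fun n => \sum_(i < n.+1) a i * b (n - i)%N.

Fixpoint fps_pow (a : fps K) (k : nat) : fps K :=
  match k with 0%N => fps1 | k'.+1 => fps_mul a (fps_pow a k') end.

(* composition a(b) = sum_k a_k b^k, meaningful when b 0 = 0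
   (then b^k has no terms of degree < k, so the sum is finite) *)
Definition fps_comp (a b : fps K) : fps K :=
  fun n => \sum_(k < n.+1) a k * fps_pow b k n.

Definition riordan (g f : fps K) : Prop :=
  g 0%N = 1 /\ f 0%N = 0 /\ f 1%N != 0.

Definition rentry (g f : fps K) (n k : nat) : K := fps_mul g (fps_pow f k) n.

Definition comp_inverse (fb f : fps K) : Prop :=
  fb 0%N = 0 /\ fps_comp f fb = fpsT /\ fps_comp fb f = fpsT.

Definition is_Zseq (g f Z : fps K) : Prop :=
  fps_mul g (fps_sub fps1 (fps_mul fpsT (fps_comp Z f))) = fps1.

(* bh is a type-II B-sequence: d_{n+1,0} = sum_j bh_j d_{n-j,j}
   (terms with n - j < 0 vanish, so j ranges over 0..n) *)
Definition is_typeII_Bseq (g f bh : fps K) : Prop :=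
  forall n : nat, rentry g f n.+1 0 = \sum_(j < n.+1) bh j * rentry g f (n - j)%N j.

End FPS.

(* Main.v *)
Require Import Defs.
From mathcomp Require Import all_boot all_algebra.
From mathcomp Require Import zify ring.
From Stdlib Require Import FunctionalExtensionality.
Set Implicit Arguments. Unset Strict Implicit. Unset Printing Implicit Defensive.
Import GRing.Theory.
Local Open Scope ring_scope.

Section Aux.
Variable K : fieldType.
Implicit Types p q : {poly K}.

Lemma sum_shrink (F : nat -> K) M N : (M <= N)%N ->
  (forall k, (M <= k)%N -> (k < N)%N -> F k = 0) ->
  \sum_(k < N) F k = \sum_(k < M) F k.
Proof.
move=> MN HF.
rewrite -!(big_mkord xpredT) (@big_cat_nat _ _ _ M 0 N _ _ (leq0n M) MN) /=.
rewrite [X in _ + X]big_nat_cond [X in _ + X]big1 ?addr0 // => k /andP[/andP[h1 h2] _].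
exact: HF.
Qed.

Lemma comp_polyE_N p q N : (size p <= N)%N ->
  p \Po q = \sum_(i < N) p`_i *: q ^+ i.
Proof.
move=> sz; rewrite comp_polyE (big_ord_widen N (fun i => p`_i *: q ^+ i) sz).
rewrite big_mkcond; apply: eq_bigr => i _; case: ifP => // /negbT.
by rewrite -leqNgt => h; rewrite nth_default // scale0r.
Qed.

Lemma pow_low q : q`_0 = 0 -> forall i m, (m < i)%N -> (q ^+ i)`_m = 0.
Proof.
move=> q0; elim=> [|i IH] m // lt.
rewrite exprS coefM big1 // => j _.
case: j => [[|j] hj] /=; first by rewrite q0 mul0r.
rewrite IH ?mulr0 //; lia.
Qed.

Definition eqn n p q := forall m, (m <= n)%N -> p`_m = q`_m.

Lemma eqn_refl n p : eqn n p p. Proof. by []. Qed.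
Lemma eqn_sym n p q : eqn n p q -> eqn n q p. Proof. by move=> h m hm; rewrite h. Qed.
Lemma eqn_trans n p q r : eqn n p q -> eqn n q r -> eqn n p r.
Proof. by move=> h1 h2 m hm; rewrite h1 ?h2. Qed.

Lemma eqnD n p q p' q' : eqn n p p' -> eqn n q q' -> eqn n (p + q) (p' + q').
Proof. by move=> h1 h2 m hm; rewrite !coefD h1 ?h2. Qed.
Lemma eqnB n p q p' q' : eqn n p p' -> eqn n q q' -> eqn n (p - q) (p' - q').
Proof. by move=> h1 h2 m hm; rewrite !coefB h1 ?h2. Qed.
Lemma eqnZ n c p q : eqn n p q -> eqn n (c *: p) (c *: q).
Proof. by move=> h m hm; rewrite !coefZ h. Qed.
Lemma eqnM n p q p' q' : eqn n p p' -> eqn n q q' -> eqn n (p * q) (p' * q').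
Proof.
move=> h1 h2 m hm; rewrite !coefM; apply: eq_bigr => j _.
have hj := ltn_ord j.
rewrite h1 ?h2 //; lia.
Qed.
Lemma eqnX n p q i : eqn n p q -> eqn n (p ^+ i) (q ^+ i).
Proof. by move=> h; elim: i => [|i IH] //; rewrite !exprS; apply: eqnM. Qed.
Lemma eqn_sum n N (F G : 'I_N -> {poly K}) :
  (forall i, eqn n (F i) (G i)) -> eqn n (\sum_(i < N) F i) (\sum_(i < N) G i).
Proof. by move=> h m hm; rewrite !coef_sum; apply: eq_bigr => i _; rewrite h. Qed.

Lemma eqn_comp n p p' q q' : eqn n p p' -> eqn n q q' -> q`_0 = 0 -> q'`_0 = 0 ->
  eqn n (p \Po q) (p' \Po q').
Proof.
move=> hp hq q0 q'0.
rewrite (@comp_polyE_N p q (maxn (size p) (size p'))) ?leq_maxl //.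
rewrite (@comp_polyE_N p' q' (maxn (size p) (size p'))) ?leq_maxr //.
apply: eqn_sum => i.
case: (leqP i n) => hi.
  by rewrite hp //; apply/eqnZ/eqnX.
move=> m hm; rewrite !coefZ !pow_low ?mulr0 //; lia.
Qed.

Lemma eqn_cancel n (G H : {poly K}) : G`_0 = 1 -> eqn n (G * H) 0 -> eqn n H 0.
Proof.
move=> G0 E m; elim/ltn_ind: m => m IH hm.
have := E m hm; rewrite coefM big_ord_recl subn0 G0 mul1r coef0 big1 ?addr0 //.
move=> i _; have hi := ltn_ord i; rewrite IH ?coef0 ?mulr0 //= /bump /=; lia.
Qed.

Definition agree n (a : fps K) p := forall m, (m <= n)%N -> a m = p`_m.
Definition A n (a : fps K) : {poly K} := \poly_(i < n.+1) a i.

Lemma agree_A n a : agree n a (A n a).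
Proof. by move=> m hm; rewrite coef_poly ltnS hm. Qed.
Lemma agree_mono N n a p : agree N a p -> (n <= N)%N -> agree n a p.
Proof. by move=> h hn m hm; apply: h; apply: leq_trans hn. Qed.
Lemma agree_eqn n a p q : agree n a p -> eqn n p q -> agree n a q.
Proof. by move=> h1 h2 m hm; rewrite h1 ?h2. Qed.
Lemma agree2eqn n a p q : agree n a p -> agree n a q -> eqn n p q.
Proof. by move=> h1 h2 m hm; rewrite -h1 ?h2. Qed.

Lemma agree_mul n a b p q : agree n a p -> agree n b q -> agree n (fps_mul a b) (p * q).
Proof.
move=> h1 h2 m hm; rewrite coefM /fps_mul; apply: eq_bigr => j _.
have hj := ltn_ord j.
rewrite h1 ?h2 //; lia.
Qed.
Lemma agree_add n a b p q : agree n a p -> agree n b q -> agree n (fps_add a b) (p + q).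
Proof. by move=> h1 h2 m hm; rewrite coefD /fps_add h1 ?h2. Qed.
Lemma agree_sub n a b p q : agree n a p -> agree n b q -> agree n (fps_sub a b) (p - q).
Proof. by move=> h1 h2 m hm; rewrite coefB /fps_sub h1 ?h2. Qed.
Lemma agree1 n : agree n (fps1 K) 1.
Proof. by move=> m hm; rewrite coef1. Qed.
Lemma agreeT n : agree n (fpsT K) 'X.
Proof. by move=> m hm; rewrite coefX. Qed.
Lemma agree_pow n a p k : agree n a p -> agree n (fps_pow a k) (p ^+ k).
Proof.
move=> h; elim: k => [|k IH] /=; first exact: agree1.
by rewrite exprS; apply: agree_mul.
Qed.

Lemma agree_comp n a b q : agree n b q -> b 0%N = 0 ->
  agree n (fps_comp a b) (A n a \Po q).
Proof.
move=> hb b0 m hm.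
have q0 : q`_0 = 0 by rewrite -hb.
rewrite (@comp_polyE_N _ _ n.+1) ?size_poly // coef_sum /fps_comp.
rewrite (@sum_shrink (fun k => ((A n a)`_k *: q ^+ k)`_m) m.+1 n.+1) //; last first.
  by move=> k h1 h2; rewrite coefZ pow_low ?mulr0.
apply: eq_bigr => k _; have hk := ltn_ord k.
rewrite coefZ coef_poly (_ : (k < n.+1)%N) ?(agree_pow k hb) //; lia.
Qed.

Lemma agree_eq n a b p : agree n a p -> agree n b p -> a n = b n.
Proof. by move=> h1 h2; rewrite h1 ?h2. Qed.

End Aux.

Section Main.
Variable K : fieldType.

Lemma tf0 (f : fps K) : f 0%N = 0 -> fps_mul (fpsT K) f 0%N = 0.
Proof. by move=> f0; rewrite /fps_mul big_ord1 subn0 f0 mulr0. Qed.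

Lemma agree_rhs1 n (g f Bh : fps K) : f 0%N = 0 ->
  agree n (fps_add (fps1 K) (fps_mul (fps_mul (fpsT K) g) (fps_comp Bh (fps_mul (fpsT K) f))))
    (1 + 'X * A n g * (A n Bh \Po ('X * A n f))).
Proof.
move=> f0; apply: agree_add; first exact: agree1.
apply: agree_mul; first by apply: agree_mul; [exact: agreeT| exact: agree_A].
apply: agree_comp; last exact: tf0.
by apply: agree_mul; [exact: agreeT| exact: agree_A].
Qed.

Lemma rentry0 (g f : fps K) n : rentry g f n 0 = g n.
Proof.
rewrite /rentry /= (agree_mul (@agree_A _ n g) (@agree1 _ n) (leqnn n)) mulr1.
by rewrite (@agree_A _ n g n (leqnn n)).
Qed.

Lemma stmt1 (g f Bh : fps K) : riordan g f -> is_typeII_Bseq g f Bh ->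
  g = fps_add (fps1 K) (fps_mul (fps_mul (fpsT K) g) (fps_comp Bh (fps_mul (fpsT K) f))).
Proof.
move=> [g0 [f0 _]] HB; apply: functional_extensionality => n.
rewrite (@agree_rhs1 n g f Bh f0 n (leqnn n)).
case: n => [|k].
  by rewrite coefD coef1 -mulrA coefXM /= addr0 g0.
rewrite coefD coef1 /= add0r -mulrA coefXM /= -(rentry0 g f) HB.
set G := A k.+1 g; set F := A k.+1 f; set Bp := A k.+1 Bh.
rewrite (@comp_polyE_N _ _ _ k.+2) ?size_poly // mulr_sumr coef_sum.
rewrite (@sum_shrink _ (fun i => (G * (Bp`_i *: ('X * F) ^+ i))`_k) k.+1 k.+2) //; last first.
  by move=> i h1 h2; rewrite -scalerAr coefZ exprMn mulrCA coefXnM h1 mulr0.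
apply: eq_bigr => i _; have hi := ltn_ord i.
rewrite -scalerAr coefZ exprMn mulrCA coefXnM ltnNge (_ : (i <= k)%N) /=; last by lia.
rewrite /Bp coef_poly (_ : (i < k.+2)%N) /=; last by lia.
congr (_ * _); rewrite /rentry.
apply: (agree_mul (agree_A _) (agree_pow _ (agree_A _))); lia.
Qed.

End Main.

Section Main2.
Variable K : fieldType.

Lemma stmt2 (g f Bh Z : fps K) : riordan g f -> is_typeII_Bseq g f Bh -> is_Zseq g f Z ->
  fps_comp Z f = fps_comp Bh (fps_mul (fpsT K) f).
Proof.
move=> Hr HB HZ; have S1 := stmt1 Hr HB; case: Hr => [g0 [f0 _]].
apply: functional_extensionality => n.
have hn : (n <= n.+1)%N by [].
have h1 := @agree_rhs1 _ n.+1 g f Bh f0; rewrite -S1 in h1.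
have h2 : agree n.+1 (fps1 K) (A n.+1 g * (1 - 'X * (A n.+1 Z \Po A n.+1 f))).
  rewrite -{1}HZ; apply: agree_mul; first exact: agree_A.
  apply: agree_sub; first exact: agree1.
  apply: agree_mul; first exact: agreeT.
  apply: agree_comp => //; exact: agree_A.
set G := A n.+1 g in h1 h2 *; set F := A n.+1 f in h1 h2 *.
set ZF := A n.+1 Z \Po F in h2 *; set BF := A n.+1 Bh \Po ('X * F) in h1 *.
have e : eqn n.+1 ('X * (G * (ZF - BF))) 0.
  move=> m hm.
  have E1 := agree2eqn (agree_A g) h1 hm.
  have E2 := agree2eqn h2 (@agree1 _ n.+1) hm.
  rewrite (_ : 'X * _ = (G - 1 - 'X * G * BF) - (G * (1 - 'X * ZF) - 1)); last by ring.
  rewrite !coefB E2 E1 coefD coef0; ring.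
have e' : eqn n (G * (ZF - BF)) 0.
  move=> m hm; move: (e m.+1 hm); rewrite coefXM /= !coef0; exact.
have G0 : G`_0 = 1 by rewrite /G coef_poly /= g0.
have := eqn_cancel G0 e' (leqnn n); rewrite coefB coef0 => /eqP; rewrite subr_eq0 => /eqP E.
rewrite (agree_comp Z (agree_A f) f0 hn) -/F -/ZF E.
by rewrite (agree_comp Bh (agree_mul (@agreeT _ n.+1) (agree_A f)) (tf0 f0) hn).
Qed.

Lemma stmt3 (g f Bh Z fb : fps K) : riordan g f -> is_typeII_Bseq g f Bh -> is_Zseq g f Z ->
  comp_inverse fb f -> Z = fps_comp Bh (fps_mul (fpsT K) fb).
Proof.
move=> Hr HB HZ [fb0 [Hffb _]]; have S2 := stmt2 Hr HB HZ; case: Hr => [g0 [f0 _]].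
apply: functional_extensionality => n.
have fbF : agree n fb (A n fb) := agree_A fb.
have c1' := agree_comp f fbF fb0; rewrite Hffb in c1'.
have c1 := agree2eqn c1' (@agreeT _ n).
have FFb0 : (A n f \Po A n fb)`_0 = 0 by rewrite c1 // coefX.
have Fb0 : (A n fb)`_0 = 0 by rewrite -(fbF 0%N (leq0n n)) fb0.
have X0 : ('X : {poly K})`_0 = 0 by rewrite coefX.
transitivity ((A n Z \Po 'X)`_n); first by rewrite comp_polyXr (agree_A Z (leqnn n)).
rewrite (eqn_comp (@eqn_refl _ _ _) (eqn_sym c1) X0 FFb0 (leqnn n)) comp_polyA.
rewrite (eqn_comp (agree2eqn (agree_comp Z (agree_A f) f0) (agree_A (fps_comp Z f)))
   (@eqn_refl _ _ _) Fb0 Fb0 (leqnn n)).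
rewrite -(agree_comp (fps_comp Z f) fbF fb0 (leqnn n)) S2.
rewrite (agree_comp _ fbF fb0 (leqnn n)).
rewrite (eqn_comp (agree2eqn (agree_A _) (agree_comp Bh (agree_mul (@agreeT _ n) (agree_A f)) (tf0 f0)))
   (@eqn_refl _ _ _) Fb0 Fb0 (leqnn n)).
rewrite -comp_polyA comp_polyM comp_polyX.
have M0 : (A n fb * (A n f \Po A n fb))`_0 = 0 by rewrite coef0M Fb0 mul0r.
have M0' : (A n fb * 'X)`_0 = 0 by rewrite coef0M Fb0 mul0r.
rewrite (eqn_comp (@eqn_refl _ _ _) (eqnM (@eqn_refl _ _ _) c1) M0 M0' (leqnn n)) mulrC.
by rewrite (agree_comp Bh (agree_mul (@agreeT _ n) fbF) (tf0 fb0) (leqnn n)).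
Qed.

End Main2.

Theorem proposition3p1 (K : fieldType) (g f Bh Z fb : fps K) :
  riordan g f ->
  is_typeII_Bseq g f Bh ->
  is_Zseq g f Z ->
  comp_inverse fb f ->
  [/\ g = fps_add (fps1 K) (fps_mul (fps_mul (fpsT K) g) (fps_comp Bh (fps_mul (fpsT K) f))),
      fps_comp Z f = fps_comp Bh (fps_mul (fpsT K) f)
    & Z = fps_comp Bh (fps_mul (fpsT K) fb)].
Proof.
move=> Hr HB HZ Hi; split; [exact: stmt1 | exact: stmt2 Hr HB HZ | exact: stmt3 Hr HB HZ Hi].
Qed.
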